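(* Suppose the constraint qualification below holds, let $\{(x^k,y^k,z^k)\}$ be generated by Algorithm G-ADMM-M with parameters $\sigma>0$, $\rho\in(0,2)$, and let $(\bar x,\bar y,\bar z)\in\mathbb{W}^*$. Then for every integer $k\ge0$, $$\Psi_k(\bar x,\bar y,\bar z)-\Psi_{k+1}(\bar x,\bar y,\bar z)\ \ge\ \theta_k+\sigma(2-\rho)\|\mathcal{A}^*x^k+\mathcal{B}^*y^k-c\|^2,$$ where $\Psi_k$ and $\theta_k$ are defined below.
   Context: Let $\mathbb{X},\mathbb{Y},\mathbb{Z}$ be finite-dimensional real Euclidean spaces with inner product $\langle\cdot,\cdot\rangle$ and induced norm $\|\cdot\|$. For a self-adjoint linear operator $\mathcal{G}$, $\|u\|_{\mathcal G}^2:=\langle u,\mathcal G u\rangle$. Let $f_1:\mathbb{X}\to\mathbb{R}$ and $h_1:\mathbb{Y}\to\mathbb{R}$ be convex, continuously differentiable with globally Lipschitz continuous gradients, and $f_2:\mathbb{X}\to(-\infty,+\infty]$, $h_2:\mathbb{Y}\to(-\infty,+\infty]$ closed proper convex. Let $\mathcal{A}:\mathbb{Z}\to\mathbb{X}$, $\mathcal{B}:\mathbb{Z}\to\mathbb{Y}$ be linear with adjoints $\mathcal{A}^*,\mathcal{B}^*$, and $c\in\mathbb{Z}$. The problem is $\min\{f_1(x)+f_2(x)+h_1(y)+h_2(y): \mathcal{A}^*x+\mathcal{B}^*y=c\}$. Let $\Sigma_{f_1}\preceq\widehat\Sigma_{f_1}$ be self-adjoint positive semidefinite operators on $\mathbb{X}$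 with $\tfrac12\|x-x'\|_{\Sigma_{f_1}}^2\le f_1(x)-f_1(x')-\langle x-x',\nabla f_1(x')\rangle\le\tfrac12\|x-x'\|_{\widehat\Sigma_{f_1}}^2$ for all $x,x'$, and likewise $\Sigma_{h_1}\preceq\widehat\Sigma_{h_1}$ on $\mathbb{Y}$ for $h_1$. Constraint qualification: there exists $(x^0,y^0)\in\operatorname{ri}(\operatorname{dom}f_2\times\operatorname{dom}h_2)$ with $\mathcal{A}^*x^0+\mathcal{B}^*y^0=c$. $\mathbb{W}^*$ denotes the set of $(\bar x,\bar y,\bar z)\in\mathbb{X}\times\mathbb{Y}\times\mathbb{Z}$ with $0\in\partial f_2(\bar x)+\nabla f_1(\bar x)+\mathcal{A}\bar z$, $0\in\partial h_2(\bar y)+\nabla h_1(\bar y)+\mathcal{B}\bar z$, $\mathcal{A}^*\bar x+\mathcal{B}^*\bar y=c$. Algorithm G-ADMM-M: choose $\sigma>0$, $\rho\in(0,2)$, self-adjoint positive semidefinite $\mathcal S$ on $\mathbb{X}$ and $\mathcal T$ on $\mathbb{Y}$ such that $\mathcal F:=\widehat\Sigma_{f_1}+\mathcal S+\sigma\mathcal{A}\mathcal{A}^*\succ0$ and $\mathcal H:=\widehat\Sigma_{h_1}+\mathcal T+\sigma\mathcal{B}\mathcal{B}^*\succ0$, and $\widetilde\omega^0=(\widetilde x^0,\widetilde y^0,\widetilde z^0)\in\operatorname{dom}f_2\times\operatorname{dom}h_2\times\mathbb{Z}$. For $k=0,1,2,\dots$: $x^k=\arg\min_x\{f_2(x)+\tfrac12\langle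 x,\mathcal F x\rangle+\langle\nabla f_1(\widetilde x^k)+\sigma\mathcal{A}(\mathcal{A}^*\widetilde x^k+\mathcal{B}^*\widetilde y^k-c+\sigma^{-1}\widetilde z^k)-\mathcal F\widetilde x^k,x\rangle\}$; $z^k=\widetilde z^k+\sigma(\mathcal{A}^*x^k+\mathcal{B}^*\widetilde y^k-c)$; $y^k=\arg\min_y\{h_2(y)+\tfrac12\langle y,\mathcal H y\rangle+\langle\nabla h_1(\widetilde y^k)+\sigma\mathcal{B}(\mathcal{A}^*x^k+\mathcal{B}^*\widetilde y^k-c+\sigma^{-1}z^k)-\mathcal H\widetilde y^k,y\rangle\}$; $\widetilde\omega^{k+1}=\widetilde\omega^k+\rho(\omega^k-\widetilde\omega^k)$ where $\omega^k=(x^k,y^k,z^k)$, $\widetilde\omega^k=(\widetilde x^k,\widetilde y^k,\widetilde z^k)$. Notation: for fixed $(\bar x,\bar y,\bar z)$, $x_e^k:=x^k-\bar x$, $y_e^k:=y^k-\bar y$, $z_e^k:=z^k-\bar z$, $\widetilde x_e^k:=\widetilde x^k-\bar x$, $\widetilde y_e^k:=\widetilde y^k-\bar y$. Define $\Psi_k(\bar x,\bar y,\bar z):=\frac{1}{\sigma\rho}\|z_e^k+\sigma(\rho-1)\mathcal{A}^*x_e^k\|^2+\sigma(2-\rho)\|\mathcal{A}^*x_e^k\|^2+\frac1\rho\|\widetilde x_e^{k+1}\|^2_{\widehat\Sigma_{f_1}+\mathcal S}+\frac1\rho\|\widetilde y_e^{k}\|^2_{\widehat\Sigma_{h_1}+\mathcal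 T}$, $\theta_k:=\|\widetilde x^{k+1}-x^{k+1}\|^2_{\frac12\Sigma_{f_1}-\widehat\Sigma_{f_1}+(2-\rho)(\widehat\Sigma_{f_1}+\mathcal S)}+\|\widetilde y^{k}-y^{k}\|^2_{\frac12\Sigma_{h_1}-\widehat\Sigma_{h_1}+(2-\rho)(\widehat\Sigma_{h_1}+\mathcal T)}$ (here $\|u\|^2_{\mathcal G}:=\langle u,\mathcal G u\rangle$ even if $\mathcal G$ is not semidefinite). *)

(* Defs.v *)
(* Euclidean spaces X, Y, Z are modelled
   as column vectors 'cV[R]_n, 'cV[R]_m, 'cV[R]_p with the standard inner
   product; linear operators are matrices, adjoints are transposes. *)
From HB Require Import structures.
From mathcomp Require Import all_boot all_order all_algebra.
From mathcomp Require Import all_classical all_reals all_analysis.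
Set Implicit Arguments. Unset Strict Implicit. Unset Printing Implicit Defensive.
Import Order.TTheory GRing.Theory Num.Theory.
Import numFieldNormedType.Exports.
Local Open Scope classical_set_scope.
Local Open Scope ring_scope.

Section Defs.
Variable R : realType.

Definition inner (N : nat) (u v : 'cV[R]_N) : R := (u^T *m v) 0 0.

Definition sqn (N : nat) (u : 'cV[R]_N) : R := inner u u.

Definition enorm (N : nat) (u : 'cV[R]_N) : R := Num.sqrt (inner u u).

(* ||u||_G^2 := <u, G u>  (G need not be semidefinite) *)
Definition qf (N : nat) (G : 'M[R]_N) (u : 'cV[R]_N) : R := inner u (G *m u).

Definition psd (N : nat) (G : 'M[R]_N) : Prop :=
  G^T = G /\ forall u, 0 <= qf G u.
Definition pd (N : nat) (G : 'M[R]_N) : Prop :=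
  G^T = G /\ forall u, u != 0 -> 0 < qf G u.

Definition convex_fun (N : nat) (f : 'cV[R]_N -> R) : Prop :=
  forall (x y : 'cV[R]_N) (t : R), 0 <= t <= 1 ->
    f (t *: x + (1 - t) *: y) <= t * f x + (1 - t) * f y.

Definition dom (N : nat) (f : 'cV[R]_N -> \bar R) : set 'cV[R]_N :=
  [set x | (f x < +oo)%E].

Definition proper_fun (N : nat) (f : 'cV[R]_N -> \bar R) : Prop :=
  (forall x, (-oo < f x)%E) /\ exists x, (f x < +oo)%E.

Definition convexE_fun (N : nat) (f : 'cV[R]_N -> \bar R) : Prop :=
  forall (x y : 'cV[R]_N) (t : R), 0 < t < 1 ->
    (f (t *: x + (1 - t) *: y)%R <= t%:E * f x + (1 - t)%:E * f y)%E.

Definition closed_fun (N : nat) (f : 'cV[R]_N -> \bar R) : Prop :=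
  forall a : R, closed [set x | (f x <= a%:E)%E].

Definition subgrad (N : nat) (f : 'cV[R]_N -> \bar R) (x v : 'cV[R]_N) : Prop :=
  f x \is a fin_num /\ forall y, (f x + (inner v (y - x))%:E <= f y)%E.

Definition aff_hull (N : nat) (C : set 'cV[R]_N) : set 'cV[R]_N :=
  [set x | exists (k : nat) (c : 'I_k -> 'cV[R]_N) (l : 'I_k -> R),
     (forall i, C (c i)) /\ \sum_(i < k) l i = 1 /\ x = \sum_(i < k) l i *: c i].

Definition rel_int (N : nat) (C : set 'cV[R]_N) : set 'cV[R]_N :=
  [set x | C x /\ exists e : R, 0 < e /\
     forall y, aff_hull C y -> enorm (y - x) < e -> C y].

End Defs.

(* Main.v *)
Require Import Defs.
From HB Require Import structures.
From mathcomp Require Import all_boot all_order all_algebra.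
From mathcomp Require Import all_classical all_reals all_analysis.
From mathcomp Require Import ring lra.
Import Order.TTheory GRing.Theory Num.Theory.
Import numFieldNormedType.Exports.
Local Open Scope classical_set_scope.
Local Open Scope ring_scope.

Section Inner.
Variable R : realType.
Variable N : nat.
Implicit Types u v w : 'cV[R]_N.

Lemma innerC u v : inner u v = inner v u.
Proof. rewrite /inner; have -> : u^T *m v = (v^T *m u)^T by rewrite trmx_mul trmxK. by rewrite mxE. Qed.
Lemma innerDl u v w : inner (u + v) w = inner u w + inner v w.
Proof. by rewrite /inner linearD mulmxDl mxE. Qed.
Lemma innerZl a u w : inner (a *: u) w = a * inner u w.
Proof. by rewrite /inner linearZ -scalemxAl mxE. Qed.
Lemma innerNl u w : inner (- u) w = - inner u w.
Proof. by rewrite -scaleN1r innerZl mulN1r. Qed.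
Lemma innerBl u v w : inner (u - v) w = inner u w - inner v w.
Proof. by rewrite innerDl innerNl. Qed.
Lemma innerDr u v w : inner w (u + v) = inner w u + inner w v.
Proof. by rewrite innerC innerDl !(innerC w). Qed.
Lemma innerZr a u w : inner w (a *: u) = a * inner w u.
Proof. by rewrite innerC innerZl innerC. Qed.
Lemma innerNr u w : inner w (- u) = - inner w u.
Proof. by rewrite innerC innerNl innerC. Qed.
Lemma innerBr u v w : inner w (u - v) = inner w u - inner w v.
Proof. by rewrite innerDr innerNr. Qed.
Lemma inner0l u : inner 0 u = 0.
Proof. by rewrite /inner linear0 mul0mx mxE. Qed.
End Inner.
Arguments innerC {R N}. Arguments innerDl {R N}. Arguments innerZl {R N}. Arguments innerNl {R N}. Arguments innerBl {R N}.
Arguments innerDr {R N}. Arguments innerZr {R N}. Arguments innerNr {R N}. Arguments innerBr {R N}. Arguments inner0l {R N}.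

Lemma inner_mul (R : realType) (N P : nat) (M : 'M[R]_(N,P)) u v :
  inner (M *m u) v = inner u (M^T *m v).
Proof. by rewrite /inner trmx_mul mulmxA. Qed.

Lemma small_t (R : realType) (K q : R) :
  (forall t : R, 0 < t < 1 -> K <= t * q) -> K <= 0.
Proof.
move=> H; rewrite leNgt; apply/negP => hK.
set Q := `|q| + 1.
have hQ : 0 < Q by rewrite /Q; have := normr_ge0 q; lra.
have hqQ : q <= Q by rewrite /Q; have := ler_norm q; lra.
have ht : 0 < K / (Q + K) < 1.
  apply/andP; split; first by apply: divr_gt0; lra.
  by rewrite ltr_pdivrMr; lra.
have := H _ ht.
have -> : K / (Q + K) * q = K * q / (Q + K) by rewrite mulrAC.
rewrite ler_pdivlMr; last lra.
nra.
Qed.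

Section Prox.
Variable R : realType.
Variable N : nat.

Lemma quad_exp0 (F : 'M[R]_N) (lin xk d : 'cV[R]_N) t : F^T = F ->
  1/2 * inner (xk - t *: d) (F *m (xk - t *: d)) + inner lin (xk - t *: d) =
  1/2 * inner xk (F *m xk) + inner lin xk - t * inner (F *m xk + lin) d
     + t ^+ 2 / 2 * inner d (F *m d).
Proof.
move=> FT.
rewrite !mulmxBr -!scalemxAr !(innerBl, innerBr, innerDl, innerDr, innerNl, innerNr, innerZl, innerZr).
have E : inner xk (F *m d) = inner (F *m xk) d.
  by rewrite innerC inner_mul FT innerC.
rewrite E (innerC d (F *m xk)).
field; by rewrite ?pnatr_eq0.
Qed.

Lemma quad_exp (F : 'M[R]_N) (lin xk xb : 'cV[R]_N) t : F^T = F ->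
  let phi := fun u => 1/2 * inner u (F *m u) + inner lin u in
  phi (t *: xb + (1 - t) *: xk) = phi xk - t * inner (F *m xk + lin) (xk - xb)
     + t ^+ 2 / 2 * inner (xk - xb) (F *m (xk - xb)).
Proof.
move=> FT phi; rewrite /phi.
have -> : t *: xb + (1 - t) *: xk = xk - t *: (xk - xb).
  by rewrite scalerBl scale1r scalerBr opprB addrCA.
exact: quad_exp0.
Qed.

Lemma prox_mono (f : 'cV[R]_N -> \bar R) (F : 'M[R]_N) lin xk xb v :
  convexE_fun f -> F^T = F ->
  (forall u, (f xk + (1/2 * inner xk (F *m xk) + inner lin xk)%:E
              <= f u + (1/2 * inner u (F *m u) + inner lin u)%:E)%E) ->
  subgrad f xb v -> inner (F *m xk + lin + v) (xk - xb) <= 0.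
Proof.
move=> cvx FT Hmin [fb Hsg].
have fbE := fineK fb; set b := fine (f xb) in fbE.
have Hs := Hsg xk; have Hm := Hmin xb.
rewrite -fbE in Hs Hm.
case E: (f xk) Hs Hm => [a| |] Hs Hm; last first.
- by move: Hs; rewrite -EFinD leeNy_eq.
- by move: Hm; rewrite -EFinD.

rewrite -!EFinD !lee_fin in Hs Hm.
rewrite innerDl.
apply: (@small_t R _ (inner (xk - xb) (F *m (xk - xb)) / 2)) => t /andP[t0 t1].
have Ht : 0 < t < 1 by apply/andP.
have Hc := cvx xb xk t Ht.
have Hu := Hmin (t *: xb + (1 - t) *: xk).
rewrite -fbE E in Hc; rewrite E in Hu.
have Hq := quad_exp F lin xk xb t FT; simpl in Hq; rewrite Hq in Hu.
have Hc' := Hc; rewrite -!EFinM -EFinD in Hc'.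
have H2 := le_trans Hu (leeD2r _ Hc').
rewrite -EFinD lee_fin in H2.
set G := inner (F *m xk + lin) (xk - xb) in H2 *.
set q := inner (xk - xb) (F *m (xk - xb)) in H2 *.
set V := inner v (xk - xb) in Hs *.
have : t * (G + V) <= t * (t * (q / 2)).
  have E2 : t ^+ 2 / 2 * q = t * (t * (q / 2)) by rewrite expr2; field; rewrite ?pnatr_eq0.
  rewrite E2 in H2.
  nra.
rewrite ler_pM2l // => h; lra.
Qed.
End Prox.

Section QF.
Variable R : realType.
Variable N : nat.
Implicit Types (G : 'M[R]_N) (u a b d : 'cV[R]_N).

Lemma qf_sym G a b : G^T = G -> inner a (G *m b) = inner b (G *m a).
Proof. by move=> GT; rewrite innerC inner_mul GT. Qed.

Lemma qf_par G a b : G^T = G -> qf G (a + b) + qf G (a - b) = 2 * qf G a + 2 * qf G b.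
Proof.
move=> GT; rewrite /qf mulmxDr mulmxBr.
rewrite !(innerBl, innerBr, innerDl, innerDr, innerNl, innerNr).
rewrite (qf_sym G a b GT); ring.
Qed.

Lemma qf_tilde G a d r : G^T = G ->
  qf G a - qf G (a + r *: d) = - 2 * r * inner (G *m d) (a + d) + r * (2 - r) * qf G d.
Proof.
move=> GT; rewrite /qf mulmxDr -scalemxAr.
rewrite !(innerBl, innerBr, innerDl, innerDr, innerNl, innerNr, innerZl, innerZr).
rewrite (qf_sym G a d GT) (innerC (G *m d) a) (innerC (G *m d) d); rewrite (qf_sym G a d GT); ring.
Qed.

Lemma qf_lin3 (M1 M2 M3 : 'M[R]_N) (a1 a3 : R) u :
  qf (a1 *: M1 - M2 + a3 *: M3) u = a1 * qf M1 u - qf M2 u + a3 * qf M3 u.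
Proof.
by rewrite /qf !mulmxDl mulNmx -!scalemxAl !(innerDr, innerNr, innerZr).
Qed.

Lemma qfD (M1 M2 : 'M[R]_N) u : qf (M1 + M2) u = qf M1 u + qf M2 u.
Proof. by rewrite /qf mulmxDl innerDr. Qed.
End QF.
Arguments qf_sym {R N}. Arguments qf_par {R N}. Arguments qf_tilde {R N}. Arguments qf_lin3 {R N}. Arguments qfD {R N}.

Section Zid.
Variable R : realType.
Variable P : nat.
Lemma z_id (w ak bt b ak1 : 'cV[R]_P) (s r : R) : s != 0 -> r != 0 ->
 let zk := w + s *: (ak + bt) in
 let zk1 := w + (r * s) *: (ak + bt) + s *: (ak1 + (bt + r *: (b - bt))) in
 1 / (s * r) * sqn (zk + (s * (r - 1)) *: ak) + s * (2 - r) * sqn ak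
 - (1 / (s * r) * sqn (zk1 + (s * (r - 1)) *: ak1) + s * (2 - r) * sqn ak1)
 + 2 * inner zk1 ak1 + 2 * inner (zk + s *: (ak + b)) b - s * (2 - r) * sqn (ak + b) = 0.
Proof.
move=> s0 r0 zk zk1; rewrite /zk1 /zk /sqn.
rewrite !(innerBl, innerBr, innerDl, innerDr, innerNl, innerNr, innerZl, innerZr).
rewrite ?(innerC ak w) ?(innerC bt w) ?(innerC b w) ?(innerC ak1 w)
  ?(innerC bt ak) ?(innerC b ak) ?(innerC ak1 ak)
  ?(innerC b bt) ?(innerC ak1 bt) ?(innerC ak1 b).
field.
by rewrite s0 r0.
Qed.
End Zid.
Arguments z_id {R P}.

Lemma grad_bound (R : realType) (N : nat) (f1 : 'cV[R]_N -> R) (g : 'cV[R]_N -> 'cV[R]_N)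
  (Sf Sfh : 'M[R]_N) :
  Sf^T = Sf -> (forall u, 0 <= qf Sf u) ->
  (forall x x', 1/2 * qf Sf (x - x') <= f1 x - f1 x' - inner (x - x') (g x')
        /\ f1 x - f1 x' - inner (x - x') (g x') <= 1/2 * qf Sfh (x - x')) ->
  forall x xt xb, 1/4 * qf Sf (x - xt) - 1/2 * qf Sfh (x - xt) <= inner (g xt - g xb) (x - xb).
Proof.
move=> ST Spsd Hb x xt xb.
have [_ h1] := Hb x xt. have [h2 _] := Hb xb xt. have [h3 _] := Hb x xb.
have Hp := qf_par Sf (x - xb) (xb - xt) ST.
have E1 : x - xb + (xb - xt) = x - xt by rewrite addrA subrK.
rewrite E1 in Hp.
have Hn := Spsd ((x - xb) - (xb - xt)).
have E : inner (g xt - g xb) (x - xb) =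
   inner (x - xt) (g xt) - inner (xb - xt) (g xt) - inner (x - xb) (g xb).
  rewrite !(innerBl, innerBr) !(innerC (g _)); ring.
rewrite E; lra.
Qed.

Lemma vec_ext (R : realType) (N : nat) (u v : 'cV[R]_N) :
  (forall w, inner u w = inner v w) -> u = v.
Proof.
move=> H; apply/matrixP => i j; rewrite (ord1 j).
by have := H (delta_mx i 0); rewrite /inner -!colE !mxE.
Qed.

Lemma qfN (R : realType) (N : nat) (G : 'M[R]_N) (u v : 'cV[R]_N) :
  qf G (u - v) = qf G (v - u).
Proof.
by rewrite -opprB /qf mulmxN innerNl innerNr opprK.
Qed.

Arguments prox_mono {R N}. Arguments grad_bound {R N}. Arguments small_t {R}.
Arguments vec_ext {R N}. Arguments inner_mul {R N P}. Arguments qfN {R N}.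

Ltac vexp := do 4 rewrite ?mulmxDr ?mulmxBr ?mulmxDl ?mulmxBl ?mulmxN ?mulNmx
  -?scalemxAr -?scalemxAl ?mulmxA ?(innerDl, innerBl, innerNl, innerZl).

Theorem lemma5 (R : realType) (n m p : nat)
  (f1 : 'cV[R]_n -> R) (gf1 : 'cV[R]_n -> 'cV[R]_n) (f2 : 'cV[R]_n -> \bar R)
  (h1 : 'cV[R]_m -> R) (gh1 : 'cV[R]_m -> 'cV[R]_m) (h2 : 'cV[R]_m -> \bar R)
  (A : 'M[R]_(n, p)) (B : 'M[R]_(m, p)) (c : 'cV[R]_p)
  (Sf Sfh : 'M[R]_n) (Sh Shh : 'M[R]_m)
  (* f1, h1: convex, continuously differentiable, Lipschitz gradients *)
  (Hf1d : forall x, differentiable f1 x)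
  (Hf1g : forall x v, derive f1 x v = inner (gf1 x) v)
  (Hf1c : convex_fun f1) (Hf1cont : continuous gf1)
  (Hf1L : exists L : R, forall x x', enorm (gf1 x - gf1 x') <= L * enorm (x - x'))
  (Hh1d : forall y, differentiable h1 y)
  (Hh1g : forall y v, derive h1 y v = inner (gh1 y) v)
  (Hh1c : convex_fun h1) (Hh1cont : continuous gh1)
  (Hh1L : exists L : R, forall y y', enorm (gh1 y - gh1 y') <= L * enorm (y - y'))
  (* f2, h2: closed proper convex *)
  (Hf2 : closed_fun f2 /\ proper_fun f2 /\ convexE_fun f2)
  (Hh2 : closed_fun h2 /\ proper_fun h2 /\ convexE_fun h2)
  (* Sigma operators *)
  (HSf : psd Sf) (HSfh : psd Sfh) (HSfle : psd (Sfh - Sf))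
  (HSh : psd Sh) (HShh : psd Shh) (HShle : psd (Shh - Sh))
  (Hf1b : forall x x', 1/2 * qf Sf (x - x') <= f1 x - f1 x' - inner (x - x') (gf1 x')
                       /\ f1 x - f1 x' - inner (x - x') (gf1 x') <= 1/2 * qf Sfh (x - x'))
  (Hh1b : forall y y', 1/2 * qf Sh (y - y') <= h1 y - h1 y' - inner (y - y') (gh1 y')
                       /\ h1 y - h1 y' - inner (y - y') (gh1 y') <= 1/2 * qf Shh (y - y'))
  (* constraint qualification *)
  (HCQ : exists (x0 : 'cV[R]_n) (y0 : 'cV[R]_m),
      rel_int [set w : 'cV[R]_(n + m) | exists x y, w = col_mx x y /\ dom f2 x /\ dom h2 y]
              (col_mx x0 y0)
      /\ A^T *m x0 + B^T *m y0 = c)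
  (* algorithm parameters *)
  (sigma rho : R) (S : 'M[R]_n) (T : 'M[R]_m)
  (Hsigma : 0 < sigma) (Hrho : 0 < rho < 2) (HS : psd S) (HT : psd T)
  (HF : pd (Sfh + S + sigma *: (A *m A^T)))
  (HH : pd (Shh + T + sigma *: (B *m B^T)))
  (* iterates *)
  (xt x : nat -> 'cV[R]_n) (yt y : nat -> 'cV[R]_m) (zt z : nat -> 'cV[R]_p)
  (Hinit : dom f2 (xt 0%N) /\ dom h2 (yt 0%N))
  (Hx : forall k (u : 'cV[R]_n),
      let F := Sfh + S + sigma *: (A *m A^T) in
      let lin := gf1 (xt k) + sigma *: (A *m (A^T *m xt k + B^T *m yt k - c + sigma^-1 *: zt k))
                 - F *m xt k in
      (f2 (x k) + (1/2 * inner (x k) (F *m x k) + inner lin (x k))%:E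
        <= f2 u + (1/2 * inner u (F *m u) + inner lin u)%:E)%E)
  (Hz : forall k, z k = zt k + sigma *: (A^T *m x k + B^T *m yt k - c))
  (Hy : forall k (u : 'cV[R]_m),
      let H := Shh + T + sigma *: (B *m B^T) in
      let lin := gh1 (yt k) + sigma *: (B *m (A^T *m x k + B^T *m yt k - c + sigma^-1 *: z k))
                 - H *m yt k in
      (h2 (y k) + (1/2 * inner (y k) (H *m y k) + inner lin (y k))%:E
        <= h2 u + (1/2 * inner u (H *m u) + inner lin u)%:E)%E)
  (Hupd : forall k, xt k.+1 = xt k + rho *: (x k - xt k)
                 /\ yt k.+1 = yt k + rho *: (y k - yt k)
                 /\ zt k.+1 = zt k + rho *: (z k - zt k))
  (* a KKT point *)
  (xb : 'cV[R]_n) (yb : 'cV[R]_m) (zb : 'cV[R]_p)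
  (HW : (exists v, subgrad f2 xb v /\ v + gf1 xb + A *m zb = 0)
        /\ (exists w, subgrad h2 yb w /\ w + gh1 yb + B *m zb = 0)
        /\ A^T *m xb + B^T *m yb = c) :
  forall k : nat,
    let Psi := fun j : nat =>
      1 / (sigma * rho) * sqn ((z j - zb) + (sigma * (rho - 1)) *: (A^T *m (x j - xb)))
      + sigma * (2 - rho) * sqn (A^T *m (x j - xb))
      + 1 / rho * qf (Sfh + S) (xt j.+1 - xb)
      + 1 / rho * qf (Shh + T) (yt j - yb) in
    let theta :=
      qf (1/2 *: Sf - Sfh + (2 - rho) *: (Sfh + S)) (xt k.+1 - x k.+1)
      + qf (1/2 *: Sh - Shh + (2 - rho) *: (Shh + T)) (yt k - y k) in
    Psi k - Psi k.+1 >= theta + sigma * (2 - rho) * sqn (A^T *m x k + B^T *m y k - c).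
Proof.
move=> k; cbv zeta.
case: HW => [[v [sv Hv]] [[w [sw Hw]] Hc]].
case: HSf => SfT Sfp; case: HSfh => SfhT _; case: HSh => ShT Shp; case: HShh => ShhT _.
case: HS => ST _; case: HT => TT _.
case: Hf2 => _ [_ cvxf]; case: Hh2 => _ [_ cvxh].
case/andP: Hrho => r0 r2.
have s0 : sigma != 0 by rewrite gt_eqF.
have rn0 : rho != 0 by rewrite gt_eqF.
have FT : (Sfh + S + sigma *: (A *m A^T))^T = Sfh + S + sigma *: (A *m A^T).
  by rewrite !linearD /= linearZ /= trmx_mul trmxK SfhT ST.
have HT' : (Shh + T + sigma *: (B *m B^T))^T = Shh + T + sigma *: (B *m B^T).
  by rewrite !linearD /= linearZ /= trmx_mul trmxK ShhT TT.
have GxT : (Sfh + S)^T = Sfh + S by rewrite linearD /= SfhT ST.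
have GyT : (Shh + T)^T = Shh + T by rewrite linearD /= ShhT TT.
have HX := prox_mono f2 _ _ (x k.+1) xb v cvxf FT (Hx k.+1) sv.
have HY := prox_mono h2 _ _ (y k) yb w cvxh HT' (Hy k) sw.
have Ev : v = - (gf1 xb + A *m zb) by apply/eqP; rewrite -addr_eq0 addrA Hv.
have Ew : w = - (gh1 yb + B *m zb) by apply/eqP; rewrite -addr_eq0 addrA Hw.
set LX := (X in inner X _) in HX.
have EX : LX = (gf1 (xt k.+1) - gf1 xb) + A *m (z k.+1 - zb) + (Sfh + S) *m (x k.+1 - xt k.+1).
  rewrite /LX Ev Hz; apply: vec_ext => u; vexp; field; by rewrite ?s0 ?rn0.
rewrite EX innerDl innerDl (inner_mul A) in HX.
have GB := grad_bound f1 gf1 Sf Sfh SfT Sfp Hf1b (x k.+1) (xt k.+1) xb.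
have XI : inner (z k.+1 - zb) (A^T *m (x k.+1 - xb))
   + inner ((Sfh + S) *m (x k.+1 - xt k.+1)) (x k.+1 - xb)
   <= - (1/4) * qf Sf (x k.+1 - xt k.+1) + 1/2 * qf Sfh (x k.+1 - xt k.+1) by lra.
set LY := (X in inner X _) in HY.
have EY : LY = (gh1 (yt k) - gh1 yb)
   + B *m ((z k - zb) + sigma *: (A^T *m (x k - xb) + B^T *m (y k - yb)))
   + (Shh + T) *m (y k - yt k).
  rewrite /LY Ew -Hc; apply: vec_ext => u; vexp; field; by rewrite ?s0 ?rn0.
rewrite EY innerDl innerDl (inner_mul B) in HY.
have GBy := grad_bound h1 gh1 Sh Shh ShT Shp Hh1b (y k) (yt k) yb.
have YI : inner ((z k - zb) + sigma *: (A^T *m (x k - xb) + B^T *m (y k - yb)))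
       (B^T *m (y k - yb))
   + inner ((Shh + T) *m (y k - yt k)) (y k - yb)
   <= - (1/4) * qf Sh (y k - yt k) + 1/2 * qf Shh (y k - yt k) by lra.
have TXq := qf_tilde (Sfh + S) (xt k.+1 - xb) (x k.+1 - xt k.+1) rho GxT.
have E1 : xt k.+1 - xb + rho *: (x k.+1 - xt k.+1) = xt k.+2 - xb.
  case: (Hupd k.+1) => -> _; apply: vec_ext => u; vexp; ring.
have E2 : xt k.+1 - xb + (x k.+1 - xt k.+1) = x k.+1 - xb.
  apply: vec_ext => u; vexp; ring.
rewrite E1 E2 in TXq.
have TX : 1/rho * qf (Sfh + S) (xt k.+1 - xb) - 1/rho * qf (Sfh + S) (xt k.+2 - xb)
   = -2 * inner ((Sfh + S) *m (x k.+1 - xt k.+1)) (x k.+1 - xb)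
     + (2 - rho) * qf (Sfh + S) (x k.+1 - xt k.+1).
  rewrite -mulrBr TXq; field; by rewrite ?s0 ?rn0.
have TYq := qf_tilde (Shh + T) (yt k - yb) (y k - yt k) rho GyT.
have E3 : yt k - yb + rho *: (y k - yt k) = yt k.+1 - yb.
  case: (Hupd k) => _ [-> _]; apply: vec_ext => u; vexp; ring.
have E4 : yt k - yb + (y k - yt k) = y k - yb.
  apply: vec_ext => u; vexp; ring.
rewrite E3 E4 in TYq.
have TY : 1/rho * qf (Shh + T) (yt k - yb) - 1/rho * qf (Shh + T) (yt k.+1 - yb)
   = -2 * inner ((Shh + T) *m (y k - yt k)) (y k - yb)
     + (2 - rho) * qf (Shh + T) (y k - yt k).
  rewrite -mulrBr TYq; field; by rewrite ?s0 ?rn0.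
have Ezk : z k - zb = zt k - zb + sigma *: (A^T *m (x k - xb) + B^T *m (yt k - yb)).
  rewrite Hz -Hc; apply: vec_ext => u; vexp; ring.
have Ezk1 : z k.+1 - zb = zt k - zb + (rho * sigma) *: (A^T *m (x k - xb) + B^T *m (yt k - yb))
   + sigma *: (A^T *m (x k.+1 - xb) + (B^T *m (yt k - yb)
        + rho *: (B^T *m (y k - yb) - B^T *m (yt k - yb)))).
  rewrite Hz; case: (Hupd k) => _ [Hyt Hzt]; rewrite Hzt Hyt Hz -Hc.
  apply: vec_ext => u; vexp; ring.
have Er : A^T *m x k + B^T *m y k - c = A^T *m (x k - xb) + B^T *m (y k - yb).
  rewrite -Hc; apply: vec_ext => u; vexp; ring.
have ZI := z_id (zt k - zb) (A^T *m (x k - xb)) (B^T *m (yt k - yb))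
   (B^T *m (y k - yb)) (A^T *m (x k.+1 - xb)) sigma rho s0 rn0.
cbv zeta in ZI.
rewrite -Ezk1 -Ezk in ZI.
rewrite Er !qf_lin3 !(qfN _ (xt k.+1) (x k.+1)) !(qfN _ (yt k) (y k)).
lra.
Qed.
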